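(* Let $\mathbb F$ be a field, $q(x_1,\dots,x_6)=x_1x_2+x_3x_4+x_5x_6$ on $\mathbb F^6$, and let $Q^+(5,\mathbb F)$ be its polar space with line-Grassmannian $Q^+_2(5,\mathbb F)$. Then for every proper subfield $\mathbb F_0$ of $\mathbb F$, the line-Grassmannian $Q^+_2(5,\mathbb F)$ is not $\mathbb F_0$-generated.
   Context: For a subfield $\mathbb F_0$, the same polynomial defines a quadratic form on $\mathbb F_0^6\subseteq\mathbb F^6$ with polar space $Q^+(5,\mathbb F_0)$. Every totally singular 2-dimensional $\mathbb F_0$-subspace $L$ of $\mathbb F_0^6$ spans over $\mathbb F$ a totally singular 2-dimensional subspace $\langle L\rangle_{\mathbb F}$ of $\mathbb F^6$. The line-Grassmannian $Q^+_2(5,\mathbb F)$ has as points the totally singular 2-dimensional subspaces of $\mathbb F^6$ and as lines the sets $\{Z: X\subset Z\subset Y\}$ of such subspaces, for $X$ a totally singular 1-space and $Y$ a totally singular 3-space with $X\subset Y$. A subspace of a point-line geometry is a set of points containing every line that meets it in at least two points; the span is the smallest subspace containing a set. $Q^+_2(5,\mathbb F)$ is $\mathbb F_0$-generated if the span of $\{\langle L\rangle_{\mathbb F}: L \text{ a line of } Q^+(5,\mathbb F_0)\}$ in $Q^+_2(5,\mathbb F)$ is the whole point set. *)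

(* Defs.v *)
From HB Require Import structures.
From mathcomp Require Import all_boot all_order all_algebra.
Set Implicit Arguments. Unset Strict Implicit. Unset Printing Implicit Defensive.
Import GRing.Theory.
Local Open Scope ring_scope.

(* The quadratic form q(x1,...,x6) = x1 x2 + x3 x4 + x5 x6 on K^6 (0-indexed). *)
Definition qf (K : fieldType) (v : 'rV[K]_6) : K :=
  v 0 (inord 0) * v 0 (inord 1) + v 0 (inord 2) * v 0 (inord 3)
  + v 0 (inord 4) * v 0 (inord 5).

Definition tot_sing (K : fieldType) (U : {vspace 'rV[K]_6}) : Prop :=
  forall v, v \in U -> qf v = 0.

Definition ts_sub (K : fieldType) (k : nat) (U : {vspace 'rV[K]_6}) : Prop :=
  (\dim U = k)%N /\ tot_sing U.

Definition grass_point (K : fieldType) (Z : {vspace 'rV[K]_6}) : Prop := ts_sub 2 Z.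

Definition grass_line (K : fieldType) (l : {vspace 'rV[K]_6} -> Prop) : Prop :=
  exists X Y : {vspace 'rV[K]_6},
    [/\ ts_sub 1 X, ts_sub 3 Y, (X <= Y)%VS &
        forall Z, l Z <-> (grass_point Z /\ (X <= Z)%VS /\ (Z <= Y)%VS)].

Definition grass_subspace (K : fieldType) (T : {vspace 'rV[K]_6} -> Prop) : Prop :=
  (forall Z, T Z -> grass_point Z) /\
  forall l, grass_line l ->
    (exists Z1 Z2, [/\ Z1 <> Z2, l Z1, T Z1, l Z2 & T Z2]) ->
    forall Z, l Z -> T Z.

Definition in_grass_span (K : fieldType) (A : {vspace 'rV[K]_6} -> Prop)
    (Z : {vspace 'rV[K]_6}) : Prop :=
  forall T, grass_subspace T -> (forall W, A W -> T W) -> T Z.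

(* The subfield F0 is given as an embedding f : F0 -> F.
   F-span <L>_F of an F0-subspace L of F0^6 (spanned by the images of a basis). *)
Definition ext_span (F0 F : fieldType) (f : {rmorphism F0 -> F})
    (L : {vspace 'rV[F0]_6}) : {vspace 'rV[F]_6} :=
  (<< [seq map_mx f v | v <- vbasis L] >>)%VS.

Definition ext_lines (F0 F : fieldType) (f : {rmorphism F0 -> F})
    (W : {vspace 'rV[F]_6}) : Prop :=
  exists L : {vspace 'rV[F0]_6}, ts_sub 2 L /\ W = ext_span f L.

Definition F0_generated (F0 F : fieldType) (f : {rmorphism F0 -> F}) : Prop :=
  forall Z, grass_point Z -> in_grass_span (ext_lines f) Z.

(* Main.v *)
Require Import Defs.
From HB Require Import structures.
From mathcomp Require Import all_boot all_order all_algebra.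
From mathcomp Require Import fingroup perm ring zify.
From Stdlib Require Import Classical.
Set Implicit Arguments. Unset Strict Implicit. Unset Printing Implicit Defensive.
Import GRing.Theory.
Local Open Scope ring_scope.

Section Basic.
Variable K : fieldType.
Implicit Types x y z : 'rV[K]_6.

Lemma sum6 (g : 'I_6 -> K) : \sum_k g k =
  g (inord 0) + g (inord 1) + g (inord 2) + g (inord 3) + g (inord 4) + g (inord 5).
Proof.
rewrite !big_ord_recl big_ord0 addr0 !addrA.
by do !congr (_ + _); congr g; apply: val_inj; rewrite /= inordK.
Qed.

Definition swf (k : 'I_6) : 'I_6 := inord (if odd k then k.-1 else k.+1).
Lemma swfK : involutive swf.
Proof.
by move=> [[|[|[|[|[|[|i]]]]]] Hi] //; apply: val_inj; rewrite /swf /= !inordK.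
Qed.
Lemma swf_inj : injective swf. Proof. exact: inv_inj swfK. Qed.
Definition sw : 'S_6 := perm swf_inj.

Definition pol x y := \sum_k x 0 k * y 0 (sw k).

Lemma swE (i : nat) : (i < 6)%N -> sw (inord i) = inord (if odd i then i.-1 else i.+1).
Proof. by move=> Hi; rewrite permE /swf inordK. Qed.

Lemma pol_expand x y : pol x y =
  x 0 (inord 0) * y 0 (inord 1) + x 0 (inord 1) * y 0 (inord 0) +
  x 0 (inord 2) * y 0 (inord 3) + x 0 (inord 3) * y 0 (inord 2) +
  x 0 (inord 4) * y 0 (inord 5) + x 0 (inord 5) * y 0 (inord 4).
Proof. by rewrite /pol sum6 !swE. Qed.

Lemma qfD x y : qf (x + y) = qf x + qf y + pol x y.
Proof. rewrite pol_expand /qf !mxE; ring. Qed.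

Lemma qfZ a x : qf (a *: x) = a ^+ 2 * qf x.
Proof. rewrite /qf !mxE; ring. Qed.
Lemma polC x y : pol x y = pol y x.
Proof. rewrite !pol_expand; ring. Qed.
Lemma polDl x y z : pol (x + y) z = pol x z + pol y z.
Proof. rewrite !pol_expand !mxE; ring. Qed.
Lemma polDr x y z : pol z (x + y) = pol z x + pol z y.
Proof. rewrite !pol_expand !mxE; ring. Qed.
Lemma polZl a x y : pol (a *: x) y = a * pol x y.
Proof. rewrite !pol_expand !mxE; ring. Qed.
Lemma polZr a x y : pol y (a *: x) = a * pol y x.
Proof. rewrite !pol_expand !mxE; ring. Qed.
Lemma polNl x y : pol (- x) y = - pol x y.
Proof. rewrite !pol_expand !mxE; ring. Qed.
Lemma polNr x y : pol y (- x) = - pol y x.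
Proof. rewrite !pol_expand !mxE; ring. Qed.
Lemma pol0l y : pol 0 y = 0.
Proof. rewrite !pol_expand !mxE; ring. Qed.
Lemma pol0r y : pol y 0 = 0.
Proof. rewrite !pol_expand !mxE; ring. Qed.
Lemma polxx x : pol x x = qf x *+ 2.
Proof. rewrite pol_expand /qf; ring. Qed.
Lemma qfN x : qf (- x) = qf x.
Proof. rewrite /qf !mxE; ring. Qed.
Lemma qf0 : qf (0 : 'rV[K]_6) = 0.
Proof. rewrite /qf !mxE; ring. Qed.

Definition rowsM (s : seq 'rV[K]_6) : 'M[K]_(size s, 6) := \matrix_(i, j) (s`_i 0 j).

Lemma rowsM_row s i : row i (rowsM s) = s`_i.
Proof. by apply/rowP => j; rewrite !mxE. Qed.

Lemma free_row_free s : free s -> row_free (rowsM s).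
Proof.
move=> fs; apply: inj_row_free => v Hv.
have := (@freeP _ _ _ (in_tuple s) fs) (fun i => v 0 i).
have -> : \sum_(i < size s) v 0 i *: (in_tuple s)`_i = v *m rowsM s.
  by rewrite mulmx_sum_row; apply: eq_bigr => i _; rewrite rowsM_row.
rewrite Hv.
move=> /(_ erefl) H; apply/rowP => i; rewrite mxE; exact: H.
Qed.

Lemma orth_rank (sA sB : seq 'rV[K]_6) : free sA -> free sB ->
  (forall a b, a \in sA -> b \in sB -> pol a b = 0) ->
  (size sA + size sB <= 6)%N.
Proof.
move=> fA fB H.
have H0 : rowsM sA *m (col_perm sw (rowsM sB))^T = 0.
  apply/matrixP => i j; rewrite !mxE.
  transitivity (pol sA`_i sB`_j); last by rewrite H ?mem_nth.
  by rewrite /pol; apply: eq_bigr => k _; rewrite !mxE.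
have := mulmx0_rank_max H0.
rewrite mxrank_tr col_permE mxrankMfree; last by rewrite row_free_unit unitmx_perm.
by rewrite (eqP (free_row_free fA)) (eqP (free_row_free fB)).
Qed.

Lemma ts_pol (U : {vspace 'rV[K]_6}) u v : tot_sing U -> u \in U -> v \in U -> pol u v = 0.
Proof.
move=> tsU uU vU; have := tsU (u + v) (memvD uU vU).
by rewrite qfD (tsU u uU) (tsU v vU) !add0r.
Qed.

Lemma noTS4 (U : {vspace 'rV[K]_6}) : tot_sing U -> (\dim U <= 3)%N.
Proof.
move=> tsU.
have fb := basis_free (vbasisP U).
have := orth_rank fb fb (fun a b Ha Hb => ts_pol tsU (vbasis_mem Ha) (vbasis_mem Hb)).
by rewrite size_tuple; lia.
Qed.

Lemma notfree_ker m n (A : 'M[K]_(m, n)) : ~~ row_free A ->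
  exists2 w : 'rV_m, w != 0 & w *m A = 0.
Proof.
rewrite -kermx_eq0 => /rowV0Pn [v vk vn0]; exists v => //.
exact/sub_kermxP.
Qed.

Lemma solve_hom m n (A : 'M[K]_(m, n)) : (n < m)%N ->
  exists2 w : 'rV_m, w != 0 & w *m A = 0.
Proof.
move=> nm; apply: notfree_ker; rewrite /row_free.
by have := rank_leq_col A; lia.
Qed.

Definition dot (x c : 'rV[K]_3) := (x *m c^T) 0 0.

Lemma solve2 (c1 c2 : 'rV[K]_3) :
  exists2 x : 'rV_3, x != 0 & dot x c1 = 0 /\ dot x c2 = 0.
Proof.
have [x xn0 Hx] := @solve_hom 3 (1 + 1) (col_mx c1 c2)^T erefl.
exists x => //; move: Hx; rewrite tr_col_mx mul_mx_row => /eqP.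
by rewrite -row_mx0 => /eqP /eq_row_mx [H1 H2]; rewrite /dot H1 H2 !mxE.
Qed.

Lemma sum3 (g : 'I_3 -> K) : \sum_k g k = g (inord 0) + g (inord 1) + g (inord 2).
Proof.
rewrite !big_ord_recl big_ord0 addr0 !addrA.
by do !congr (_ + _); congr g; apply: val_inj; rewrite /= inordK.
Qed.

Lemma dot_expand (x c : 'rV[K]_3) : dot x c = x 0 (inord 0) * c 0 (inord 0) +
   x 0 (inord 1) * c 0 (inord 1) + x 0 (inord 2) * c 0 (inord 2).
Proof. by rewrite /dot mxE sum3 !mxE. Qed.

Definition oddp (u : 'rV[K]_6) : 'rV[K]_3 := \row_(i < 3) u 0 (inord (i.*2.+1)).
Definition evenp (u : 'rV[K]_6) : 'rV[K]_3 := \row_(i < 3) u 0 (inord (i.*2)).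
Definition iE (x : 'rV[K]_3) : 'rV[K]_6 :=
  \row_(j < 6) (if odd j then 0 else x 0 (inord j./2)).
Definition iE' (x : 'rV[K]_3) : 'rV[K]_6 :=
  \row_(j < 6) (if odd j then x 0 (inord j./2) else 0).

Lemma pol_iE u (x : 'rV[K]_3) : pol u (iE x) = dot x (oddp u).
Proof. rewrite pol_expand dot_expand !mxE !inordK //=; ring. Qed.
Lemma pol_iE' u (x : 'rV[K]_3) : pol u (iE' x) = dot x (evenp u).
Proof. rewrite pol_expand dot_expand !mxE !inordK //=; ring. Qed.
Lemma qf_iE (x : 'rV[K]_3) : qf (iE x) = 0.
Proof. rewrite /qf !mxE !inordK //=; ring. Qed.
Lemma qf_iE' (x : 'rV[K]_3) : qf (iE' x) = 0.
Proof. rewrite /qf !mxE !inordK //=; ring. Qed.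
Lemma oddp_iE (x : 'rV[K]_3) : oddp (iE x) = 0.
Proof. by apply/rowP => i; rewrite !mxE inordK ?odd_double //; case: i => [[|[|[|]]]]. Qed.
Lemma evenp_iE (x : 'rV[K]_3) : evenp (iE x) = x.
Proof.
apply/rowP => i; rewrite !mxE inordK ?odd_double /=; last by case: i => [[|[|[|]]]].
by rewrite doubleK inord_val.
Qed.
Lemma evenp_iE' (x : 'rV[K]_3) : evenp (iE' x) = 0.
Proof. by apply/rowP => i; rewrite !mxE inordK ?odd_double //; case: i => [[|[|[|]]]]. Qed.
Lemma evenpD (u v : 'rV[K]_6) : evenp (u + v) = evenp u + evenp v.
Proof. by apply/rowP => i; rewrite !mxE. Qed.
Lemma evenpZ c (u : 'rV[K]_6) : evenp (c *: u) = c *: evenp u.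
Proof. by apply/rowP => i; rewrite !mxE. Qed.
Lemma iEZ c (x : 'rV[K]_3) : iE (c *: x) = c *: iE x.
Proof. by apply/rowP => j; rewrite !mxE; case: ifP; rewrite ?mulr0. Qed.
Lemma iE'Z c (x : 'rV[K]_3) : iE' (c *: x) = c *: iE' x.
Proof. by apply/rowP => j; rewrite !mxE; case: ifP; rewrite ?mulr0. Qed.
Lemma iE_inj (x : 'rV[K]_3) : iE x = 0 -> x = 0.
Proof. by move=> H; rewrite -(evenp_iE x) H; apply/rowP => i; rewrite !mxE. Qed.

Lemma oddp_iE' (x : 'rV[K]_3) : oddp (iE' x) = x.
Proof.
apply/rowP => i; rewrite !mxE inordK /=; last by case: i => [[|[|[|]]]].
by rewrite odd_double /= uphalf_double inord_val.
Qed.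

Lemma mem_span_cons (w v : 'rV[K]_6) X : w \in <<v :: X>>%VS ->
  exists c w', w' \in <<X>>%VS /\ w = c *: v + w'.
Proof.
rewrite span_cons => /memv_addP [u /vlineP [c ->] [w' Hw' ->]].
by exists c, w'.
Qed.

Lemma mem_span2 (w a b : 'rV[K]_6) : w \in <<[:: a; b]>>%VS ->
  exists c d, w = c *: a + d *: b.
Proof.
move=> /mem_span_cons [c [w' [/mem_span_cons [d [w'' [H ->]]] ->]]].
move: H; rewrite span_nil memv0 => /eqP ->; exists c, d; by rewrite addr0.
Qed.

Lemma orth_span (x : 'rV[K]_6) X : (forall v, v \in X -> pol x v = 0) ->
  forall w, w \in <<X>>%VS -> pol x w = 0.
Proof.
elim: X => [|v X IH] H w.
  by rewrite span_nil memv0 => /eqP ->; rewrite pol0r.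
move=> /mem_span_cons [c [w' [Hw' ->]]].
rewrite polDr polZr H ?mem_head // IH ?mulr0 ?add0r // => u Hu.
by apply: H; rewrite inE Hu orbT.
Qed.

Lemma ts_add (U V : {vspace 'rV[K]_6}) : tot_sing U -> tot_sing V ->
  (forall u v, u \in U -> v \in V -> pol u v = 0) -> tot_sing (U + V).
Proof.
move=> tU tV H w /memv_addP [u Hu [v Hv ->]].
by rewrite qfD tU // tV // H // !addr0.
Qed.



Lemma step1 (u1 u2 : 'rV[K]_6) : free [:: u1; u2] -> qf u1 = 0 -> qf u2 = 0 ->
  pol u1 u2 = 0 ->
  exists a, [/\ qf a = 0, pol u1 a = 0, pol u2 a = 0 & free [:: a; u1; u2]].
Proof.
move=> fu q1 q2 p12.
have [x xn0 [hx1 hx2]] := solve2 (oddp u1) (oddp u2).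
pose a := iE x.
case: (boolP (a \in <<[:: u1; u2]>>%VS)) => [aL|aL]; last first.
  by exists a; split; rewrite ?qf_iE ?pol_iE // free_cons aL fu.
have [x' xn0' [hy1 hy2]] := solve2 (evenp u1) (evenp u2).
pose a' := iE' x'.
case: (boolP (a' \in <<[:: u1; u2]>>%VS)) => [a'L|a'L]; last first.
  by exists a'; split; rewrite ?qf_iE' ?pol_iE' // free_cons a'L fu.
have [j xj] : exists j, x 0 j != 0 by apply/rV0Pn.
have [z zn0 [hz1 hz2]] := solve2 (oddp a') (delta_mx 0 j).
pose e := iE z.
have pae : pol a e = 0.
  by rewrite pol_iE oddp_iE /dot trmx0 mulmx0 mxE.
have pa'e : pol a' e = 0 by rewrite pol_iE.
have ze : z 0 j = 0.
  by move: hz2; rewrite /dot trmx_delta -colE mxE.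
have a'n0 : a' != 0.
  apply/eqP => H; move: xn0'; rewrite -(oddp_iE' x') -/a' H.
  suff -> : oddp (0 : 'rV[K]_6) = 0 by rewrite eqxx.
  by apply/rowP => i; rewrite !mxE.
have faa : free [:: a; a'].
  rewrite free_cons /= span_seq1 seq1_free a'n0 andbT.
  apply/negP => /vlineP [c Hc].
  have := congr1 evenp Hc; rewrite evenpZ evenp_iE evenp_iE' scaler0 => H.
  by move: xn0; rewrite H eqxx.
have Heq : <<[:: a; a']>>%VS = <<[:: u1; u2]>>%VS.
  apply/eqP; rewrite eqEdim; apply/andP; split.
    by apply/span_subvP => v; rewrite !inE => /orP [/eqP ->|/eqP ->].
  by rewrite (eqP fu) (eqP faa).
have peu : forall u, u \in <<[:: u1; u2]>>%VS -> pol e u = 0.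
  rewrite -Heq; apply: orth_span => v; rewrite !inE => /orP [/eqP ->|/eqP ->].
  - rewrite (polC e a); exact pae.
  - rewrite (polC e a'); exact pa'e.
exists e; split; rewrite ?qf_iE //.
- by rewrite polC peu // memv_span // mem_head.
- by rewrite polC peu // memv_span // !inE eqxx orbT.
- rewrite free_cons fu andbT -Heq; apply/negP => /mem_span2 [c [d Hcd]].
  have := congr1 evenp Hcd.
  rewrite evenpD !evenpZ evenp_iE evenp_iE' evenp_iE scaler0 addr0 => Hz.
  have : c * x 0 j = 0 by rewrite -ze Hz mxE.
  move/eqP; rewrite mulf_eq0 (negPf xj) orbF => /eqP c0.
  by move: zn0; rewrite Hz c0 scale0r eqxx.
Qed.

Lemma swK (k : 'I_6) : sw (sw k) = k.
Proof. by rewrite !permE swfK. Qed.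

Lemma step2 (a u1 u2 : 'rV[K]_6) : free [:: a; u1; u2] ->
  exists b, [/\ pol a b = 1, pol u1 b = 0 & pol u2 b = 0].
Proof.
move=> /free_row_free /row_freeP [B HB].
pose b : 'rV[K]_6 := \row_j B (sw j) 0.
have key : forall i : 'I_3, pol [:: a; u1; u2]`_i b = (1%:M : 'M[K]_3) i 0.
  move=> i; rewrite -HB mxE /pol; apply: eq_bigr => k _.
  by rewrite !mxE swK.
exists b; split.
- by move: (key 0); rewrite mxE /= => ->.
- by move: (key (@Ordinal 3 1 isT)); rewrite mxE /=.
- by move: (key (@Ordinal 3 2 isT)); rewrite mxE /=.
Qed.

Lemma hyp_pair (u1 u2 : 'rV[K]_6) : free [:: u1; u2] -> qf u1 = 0 -> qf u2 = 0 ->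
  pol u1 u2 = 0 ->
  exists a s, [/\ qf a = 0, qf s = 0, pol a s = 1 &
      [/\ pol u1 a = 0, pol u2 a = 0, pol u1 s = 0 & pol u2 s = 0]].
Proof.
move=> fu q1 q2 p12.
have [a [qa p1a p2a fa]] := step1 fu q1 q2 p12.
have [b [pab p1b p2b]] := step2 fa.
exists a, (b - qf b *: a); split => //.
- rewrite qfD qfN qfZ qa mulr0 addr0 polNr polZr (polC b a) pab; ring.
- rewrite polDr polNr polZr pab polxx qa; ring.
- split => //.
  + by rewrite polDr polNr polZr p1b p1a; ring.
  + by rewrite polDr polNr polZr p2b p2a; ring.
Qed.

Lemma dim_addl (U : {vspace 'rV[K]_6}) v : v \notin U -> \dim (U + <[v]>) = (\dim U).+1.
Proof.
move=> vU.
have vn0 : v != 0 by apply: contraNneq vU => ->; rewrite mem0v.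
have := dimv_sum_cap U <[v]>; rewrite dim_vline vn0.
have : (\dim (U :&: <[v]>) < 1)%N.
  have := dimv_leqif_eq (capvSr U <[v]>); rewrite dim_vline vn0 => H.
  rewrite (ltn_leqif H); apply/negP => /eqP E.
  by move: vU; rewrite memvE -E capvSl.
lia.
Qed.

Lemma cap_eq (A B C : {vspace 'rV[K]_6}) : (C <= A)%VS -> (C <= B)%VS -> A <> B ->
  \dim A = (\dim C).+1 -> \dim B = (\dim C).+1 -> (A :&: B)%VS = C.
Proof.
move=> CA CB AB dA dB.
have CAB : (C <= A :&: B)%VS by rewrite subv_cap CA CB.
have : (\dim (A :&: B) < \dim A)%N.
  rewrite (ltn_leqif (dimv_leqif_eq (capvSl A B))); apply/negP => /eqP E.
  have AB' : (A <= B)%VS by rewrite -E capvSr.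
  apply: AB; apply/eqP; rewrite eqEdim AB' dA dB leqnn //.
move=> H; apply/eqP; rewrite eq_sym eqEdim CAB /=; lia.
Qed.

Lemma ts_line (r : 'rV[K]_6) : qf r = 0 -> tot_sing <[r]>.
Proof. by move=> qr v /vlineP [c ->]; rewrite qfZ qr mulr0. Qed.

Lemma ts3_max (P : {vspace 'rV[K]_6}) r : ts_sub 3 P -> qf r = 0 ->
  (forall p, p \in P -> pol p r = 0) -> r \in P.
Proof.
move=> [dP tP] qr H; apply/negPn/negP => rP.
have Hts : tot_sing (P + <[r]>).
  apply: (ts_add tP (ts_line qr)) => u v Hu /vlineP [c ->].
  by rewrite polZr H // mulr0.
by have := noTS4 Hts; rewrite dim_addl // dP.
Qed.

Lemma free3P (v1 v2 v3 : 'rV[K]_6) c1 c2 c3 : free [:: v1; v2; v3] ->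
  c1 *: v1 + c2 *: v2 + c3 *: v3 = 0 -> [/\ c1 = 0, c2 = 0 & c3 = 0].
Proof.
rewrite !free_cons span_nil memv0 nil_free andbT => /and3P [n1 n2 n3] E.
have c10 : c1 = 0.
  apply/eqP; apply/negPn/negP => c1n0; move/negP: n1; apply; rewrite span_cons span_seq1.
  have -> : v1 = c1^-1 *: (- (c2 *: v2 + c3 *: v3)).
    apply: (scalerI c1n0); rewrite scalerA mulfV // scale1r.
    by apply/eqP; rewrite -addr_eq0 addrA E.
  by apply: memvZ; rewrite memvN; apply: memv_add; apply: memvZ; apply: memv_line.
move: E; rewrite c10 scale0r add0r => E.
have c20 : c2 = 0.
  apply/eqP; apply/negPn/negP => c2n0; move/negP: n2; apply; rewrite span_seq1.
  have -> : v2 = c2^-1 *: (- (c3 *: v3)).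
    apply: (scalerI c2n0); rewrite scalerA mulfV // scale1r.
    by apply/eqP; rewrite -addr_eq0 E.
  by apply: memvZ; rewrite memvN; apply: memvZ; apply: memv_line.
move: E; rewrite c20 scale0r add0r => /eqP; rewrite scaler_eq0 (negPf n3) orbF.
by move/eqP.
Qed.

Lemma mem_span3 (w a b c : 'rV[K]_6) : w \in <<[:: a; b; c]>>%VS ->
  exists c1 c2 c3, w = c1 *: a + c2 *: b + c3 *: c.
Proof.
move=> /mem_span_cons [c1 [w' [/mem_span2 [c2 [c3 ->]] ->]]].
by exists c1, c2, c3; rewrite addrA.
Qed.

Lemma exists_nz (U : {vspace 'rV[K]_6}) : (0 < \dim U)%N -> exists2 x, x \in U & x != 0.
Proof.
move=> dU; have : ~~ (U <= 0)%VS.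
  by apply/negP => /dimvS; rewrite dimv0; lia.
by move=> /subvPn [x xU]; rewrite memv0 => xn0; exists x.
Qed.

Lemma row3_eq0 (x : 'rV[K]_3) : x 0 (inord 0) = 0 -> x 0 (inord 1) = 0 ->
  x 0 (inord 2) = 0 -> x = 0.
Proof.
move=> h0 h1 h2; apply/rowP => i; rewrite mxE.
case: i => [[|[|[|i]]] Hi] //.
- by rewrite -h0; congr (x 0 _); apply/val_inj; rewrite /= inordK.
- by rewrite -h1; congr (x 0 _); apply/val_inj; rewrite /= inordK.
- by rewrite -h2; congr (x 0 _); apply/val_inj; rewrite /= inordK.
Qed.

Lemma row6_eq0 (x : 'rV[K]_6) : (forall k, (k < 6)%N -> x 0 (inord k) = 0) -> x = 0.
Proof.
move=> H; apply/rowP => i; rewrite mxE.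
have -> : i = inord i by apply/val_inj; rewrite /= inordK.
exact: H.
Qed.
End Basic.

Section Rat.
Variables (F0 F : fieldType) (f : {rmorphism F0 -> F}).
Local Notation mf := (map_mx f).

Lemma qf_map (u : 'rV[F0]_6) : qf (mf u) = f (qf u).
Proof. by rewrite /qf !mxE !rmorphD !rmorphM. Qed.

Lemma pol_map (u v : 'rV[F0]_6) : pol (mf u) (mf v) = f (pol u v).
Proof. by rewrite !pol_expand !mxE !rmorphD !rmorphM. Qed.

Lemma qf_map0 (u : 'rV[F0]_6) : qf (mf u) = 0 -> qf u = 0.
Proof. by rewrite qf_map => /eqP; rewrite fmorph_eq0 => /eqP. Qed.

Lemma pol_map0 (u v : 'rV[F0]_6) : pol (mf u) (mf v) = 0 -> pol u v = 0.
Proof. by rewrite pol_map => /eqP; rewrite fmorph_eq0 => /eqP. Qed.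

Lemma span_map (x : 'rV[F0]_6) X : x \in <<X>>%VS -> mf x \in <<map mf X>>%VS.
Proof.
elim: X x => [|v X IH] x.
  by rewrite span_nil memv0 => /eqP ->; rewrite map_mx0 mem0v.
move=> /mem_span_cons [c [w [Hw ->]]].
rewrite map_mxD map_mxZ /= span_cons.
by apply: memv_add; [apply: memvZ; apply: memv_line | apply: IH].
Qed.

Lemma free_unmap (X : seq 'rV[F0]_6) : free (map mf X) -> free X.
Proof.
elim: X => [_|v X IH] /=; first exact: nil_free.
rewrite !free_cons => /andP [Hn Hf].
apply/andP; split; last exact: IH.
by apply: contra Hn; apply: span_map.
Qed.

Lemma ratker m n (C0 : 'M[F0]_(m, n)) :
  (exists2 w : 'rV[F]_m, w != 0 & w *m map_mx f C0 = 0) ->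
  exists2 w0 : 'rV[F0]_m, w0 != 0 & w0 *m C0 = 0.
Proof.
move=> [w wn0 Hw]; apply: notfree_ker; rewrite -(row_free_map f).
apply/negP => rf.
have : w *m map_mx f C0 = 0 *m map_mx f C0 by rewrite Hw mul0mx.
by move/(row_free_inj rf) => w0; move: wn0; rewrite w0 eqxx.
Qed.

Definition RatPt (Z : {vspace 'rV[F]_6}) := exists2 u : 'rV[F0]_6, u != 0 & mf u \in Z.
Definition RatFull (Y : {vspace 'rV[F]_6}) := exists u1 u2 u3 : 'rV[F0]_6,
  [/\ free [:: mf u1; mf u2; mf u3], mf u1 \in Y, mf u2 \in Y & mf u3 \in Y].

Lemma factA (Y : {vspace 'rV[F]_6}) u1 u2 : ts_sub 3 Y -> mf u1 \in Y -> mf u2 \in Y ->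
  free [:: mf u1; mf u2] -> RatFull Y.
Proof.
move=> [dY tY] H1 H2 fr.
have fu : free [:: u1; u2] by apply: free_unmap.
have q1 : qf u1 = 0 by apply: qf_map0; apply: tY.
have q2 : qf u2 = 0 by apply: qf_map0; apply: tY.
have p12 : pol u1 u2 = 0 by apply: pol_map0; apply: (ts_pol tY).
have [a0 [s0 [qa qs pas [p1a p2a p1s p2s]]]] := hyp_pair fu q1 q2 p12.
set r1 := mf u1 in H1 fr *; set r2 := mf u2 in H2 fr *.
pose a := mf a0; pose s := mf s0.
have qa' : qf a = 0 by rewrite qf_map qa rmorph0.
have qs' : qf s = 0 by rewrite qf_map qs rmorph0.
have pas' : pol a s = 1 by rewrite pol_map pas rmorph1.
have pa1 : pol a r1 = 0 by rewrite polC pol_map p1a rmorph0.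
have pa2 : pol a r2 = 0 by rewrite polC pol_map p2a rmorph0.
have ps1 : pol s r1 = 0 by rewrite polC pol_map p1s rmorph0.
have ps2 : pol s r2 = 0 by rewrite polC pol_map p2s rmorph0.
have oa : forall v, v \in [:: r1; r2] -> pol a v = 0.
  by move=> v; rewrite !inE => /orP [/eqP ->|/eqP ->].
have os : forall v, v \in [:: r1; r2] -> pol s v = 0.
  by move=> v; rewrite !inE => /orP [/eqP ->|/eqP ->].
have na : a \notin <<[:: r1; r2]>>%VS.
  apply/negP => Ha; have := orth_span os Ha.
  by rewrite polC pas' => /eqP; rewrite oner_eq0.
have ns : s \notin <<[:: r1; r2]>>%VS.
  apply/negP => Ha; have := orth_span oa Ha.
  by rewrite pas' => /eqP; rewrite oner_eq0.
have fas : free [:: a; s; r1; r2].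
  rewrite free_cons free_cons fr ns !andbT.
  apply/negP => Ha.
  have os' : forall v, v \in [:: s; r1; r2] -> pol s v = 0.
    move=> v; rewrite inE => /orP [/eqP ->|Hv]; last exact: os.
    by rewrite polxx qs' mul0rn.
  have := orth_span os' Ha.
  by rewrite polC pas' => /eqP; rewrite oner_eq0.
have LY : (<<[:: r1; r2]>> <= Y)%VS.
  by apply/span_subvP => v; rewrite !inE => /orP [/eqP ->|/eqP ->].
have [y yY yL] : exists2 y, y \in Y & y \notin <<[:: r1; r2]>>%VS.
  apply/subvPn; apply/negP => sub; have := dimvS sub.
  by rewrite dY (eqP fr).
have yS : y \in <<[:: a; s; r1; r2]>>%VS.
  apply/negPn/negP => Hy.
  have := @orth_rank _ [:: r1; r2] [:: y; a; s; r1; r2] fr.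
  rewrite free_cons Hy fas => /(_ isT) H.
  suff : (2 + 5 <= 6)%N by [].
  apply: H => u v Hu Hv.
  have uY : u \in Y by apply: (subvP LY); apply: memv_span.
  have [pua pus] : pol u a = 0 /\ pol u s = 0.
    by rewrite !(polC u) oa // os.
  move: Hv; rewrite inE => /orP [/eqP ->|]; first exact: ts_pol tY uY yY.
  rewrite inE => /orP [/eqP -> //|]; rewrite inE => /orP [/eqP -> //| Hv].
  by apply: ts_pol tY uY _; apply: (subvP LY); apply: memv_span.
move: yS => /mem_span_cons [c1 [w [/mem_span_cons [c2 [l [Hl Ew]]] Ey]]].
have lY : l \in Y by apply: (subvP LY).
have ql : qf l = 0 := tY l lY.
have pal : pol a l = 0 := orth_span oa Hl.
have psl : pol s l = 0 := orth_span os Hl.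
have Eq : qf y = c1 * c2.
  rewrite Ey Ew !qfD !qfZ !polDr !polZl !polZr qa' qs' ql pas' pal psl; ring.
move: Eq; rewrite (tY y yY) => /esym /eqP; rewrite mulf_eq0 => /orP [/eqP c10|/eqP c20].
- have c2n0 : c2 != 0.
    apply: contraNneq yL => c20; rewrite Ey Ew c10 c20 !scale0r !add0r; exact: Hl.
  have sY : s \in Y.
    have -> : s = c2^-1 *: (y - l).
      by rewrite Ey Ew c10 scale0r add0r addrK scalerA mulVf // scale1r.
    by rewrite memvZ // memvB.
  exists s0, u1, u2; split => //.
  by rewrite free_cons ns fr.
- have c1n0 : c1 != 0.
    apply: contraNneq yL => c10; rewrite Ey Ew c10 c20 !scale0r !add0r; exact: Hl.
  have aY : a \in Y.
    have -> : a = c1^-1 *: (y - l).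
      by rewrite Ey Ew c20 scale0r add0r addrK scalerA mulVf // scale1r.
    by rewrite memvZ // memvB.
  exists a0, u1, u2; split => //.
  by rewrite free_cons na fr.
Qed.

Definition RatPl (Z : {vspace 'rV[F]_6}) :=
  exists P, [/\ ts_sub 3 P, (Z <= P)%VS & RatFull P].

Lemma map_comb3 (x1 x2 x3 : F0) (b1 b2 b3 : 'rV[F0]_6) :
  mf (x1 *: b1 + x2 *: b2 + x3 *: b3) = f x1 *: mf b1 + f x2 *: mf b2 + f x3 *: mf b3.
Proof. by rewrite !map_mxD !map_mxZ. Qed.

Lemma comb3_nz (x : 'rV[F0]_3) (b1 b2 b3 : 'rV[F0]_6) :
  free [:: mf b1; mf b2; mf b3] -> x != 0 ->
  mf (x 0 (inord 0) *: b1 + x 0 (inord 1) *: b2 + x 0 (inord 2) *: b3) != 0.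
Proof.
move=> fb xn0; rewrite map_comb3; apply/negP => /eqP E.
have [e1 e2 e3] := free3P fb E.
move: xn0; rewrite (@row3_eq0 _ x) ?eqxx //; apply/eqP; by rewrite -(fmorph_eq0 f); apply/eqP.
Qed.

Lemma line_key (X Y Z1 Z2 : {vspace 'rV[F]_6}) :
  ts_sub 1 X -> ts_sub 3 Y -> grass_point Z1 -> grass_point Z2 ->
  (X <= Z1)%VS -> (Z1 <= Y)%VS -> (X <= Z2)%VS -> (Z2 <= Y)%VS -> Z1 <> Z2 ->
  (RatPt Z1 \/ RatPl Z1) -> (RatPt Z2 \/ RatPl Z2) -> RatPt X \/ RatFull Y.
Proof.
move=> [dX tX] [dY tY] [d1 t1] [d2 t2] XZ1 Z1Y XZ2 Z2Y Z12 T1 T2.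
have capX : (Z1 :&: Z2)%VS = X by apply: cap_eq; rewrite ?d1 ?d2 ?dX.
have M1 : forall v, v \in Z1 -> v \in Z2 -> v \in X.
  by move=> v H1 H2; rewrite -capX memv_cap H1 H2.
have YZ : (Y <= Z1 + Z2)%VS.
  have S : (Z1 + Z2 <= Y)%VS by rewrite subv_add Z1Y Z2Y.
  have := dimv_sum_cap Z1 Z2; rewrite capX d1 d2 dX => E.
  have : (Z1 + Z2)%VS == Y by rewrite eqEdim S dY; lia.
  by move/eqP ->.
have M3 : forall P Z, ts_sub 3 P -> grass_point Z -> (Z <= P)%VS -> (Z <= Y)%VS ->
    P <> Y -> forall v, v \in P -> v \in Y -> v \in Z.
  move=> P Z [dP _] [dZ _] ZP ZY PY v vP vY.
  by rewrite -(cap_eq ZP ZY PY) ?dP ?dY ?dZ // memv_cap vP vY.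
have caseA : forall Za Zb : {vspace 'rV[F]_6},
    (forall v, v \in Za -> v \in Zb -> v \in X) -> (Za <= Y)%VS -> (Zb <= Y)%VS ->
    forall u1 u2, mf u1 \in Za -> mf u1 \notin X -> mf u2 \in Zb -> mf u2 \notin X ->
    RatFull Y.
  move=> Za Zb Mab ZaY ZbY u1 u2 H1 n1 H2 n2.
  apply: (factA (conj dY tY) (subvP ZaY _ H1) (subvP ZbY _ H2)).
  rewrite free_cons span_seq1 free_cons span_nil memv0 nil_free andbT; apply/andP; split.
    apply/negP => /vlineP [c E]; apply: (negP n1); apply: Mab H1 _.
    by rewrite E memvZ.
  by apply: contraNneq n2 => ->; exact: mem0v.
have caseC : forall Za Zb : {vspace 'rV[F]_6},
    (forall v, v \in Za -> v \in Zb -> v \in X) -> grass_point Zb ->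
    (Za <= Y)%VS -> (Zb <= Y)%VS -> forall u, u != 0 -> mf u \in Za ->
    RatPl Zb -> RatPt X \/ RatFull Y.
  move=> Za Zb Mab [dZb tZb] ZaY ZbY u un0 Hu [P [[dP tP] ZbP [b1 [b2 [b3 [fb B1 B2 B3]]]]]].
  case: (boolP (mf u \in X)) => [uX|uX]; first by left; exists u.
  case: (eqVneq P Y) => [PY|PY]; first by right; rewrite -PY; exists b1, b2, b3.
  pose c : 'rV[F0]_3 := \row_(i < 3) pol u ([:: b1; b2; b3]`_i).
  have [x xn0 [hx _]] := solve2 c c.
  pose s0 := x 0 (inord 0) *: b1 + x 0 (inord 1) *: b2 + x 0 (inord 2) *: b3.
  have ps0 : pol u s0 = 0.
    rewrite -hx dot_expand /s0 !mxE !inordK //= !polDr !polZr; ring.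
  have sn0 : mf s0 != 0 by apply: comb3_nz.
  have s0n0 : s0 != 0 by apply: contraNneq sn0 => ->; rewrite map_mx0.
  have sP : mf s0 \in P.
    by rewrite map_comb3; apply: memvD; [apply: memvD|]; apply: memvZ.
  have prs : pol (mf u) (mf s0) = 0 by rewrite pol_map ps0 rmorph0.
  have sZb : mf s0 \in Zb.
    apply/negPn/negP => sn.
    have EP : (Zb + <[mf s0]>)%VS = P.
      apply/eqP; rewrite eqEdim dim_addl // dZb dP leqnn andbT subv_add ZbP /=.
      by rewrite -memvE.
    have rP : mf u \in P.
      apply: (ts3_max (conj dP tP) (tY _ (subvP ZaY _ Hu))) => p.
      rewrite -EP => /memv_addP [z Hz [w /vlineP [k ->] ->]].
      rewrite polDl polZl (polC (mf s0)) prs mulr0 addr0.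
      exact: ts_pol tY (subvP ZbY _ Hz) (subvP ZaY _ Hu).
    have rZb : mf u \in Zb.
      exact: M3 P Zb (conj dP tP) (conj dZb tZb) ZbP ZbY (elimN eqP PY) _ rP (subvP ZaY _ Hu).
    by move: uX; rewrite (Mab _ Hu rZb).
  case: (boolP (mf s0 \in X)) => [sX|sX]; first by left; exists s0.
  by right; apply: (caseA Za Zb Mab ZaY ZbY u s0).
have M1' : forall v, v \in Z2 -> v \in Z1 -> v \in X by move=> v H2 H1; exact: M1.
case: T1 => [[u1 u1n0 H1]|P1l]; case: T2 => [[u2 u2n0 H2]|P2l].
- case: (boolP (mf u1 \in X)) => [uX|uX]; first by left; exists u1.
  case: (boolP (mf u2 \in X)) => [vX|vX]; first by left; exists u2.
  by right; apply: (caseA Z1 Z2 M1 Z1Y Z2Y u1 u2).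
- exact: (caseC Z1 Z2 M1 (conj d2 t2) Z1Y Z2Y u1 u1n0 H1 P2l).
- exact: (caseC Z2 Z1 M1' (conj d1 t1) Z2Y Z1Y u2 u2n0 H2 P1l).
move: P1l P2l => [P1 [[dP1 tP1] Z1P1 [a1 [a2 [a3 [fa A1 A2 A3]]]]]]
                 [P2 [[dP2 tP2] Z2P2 [b1 [b2 [b3 [fb B1 B2 B3]]]]]].
case: (eqVneq P1 Y) => [PY|P1Y]; first by right; rewrite -PY; exists a1, a2, a3.
case: (eqVneq P2 Y) => [PY|P2Y]; first by right; rewrite -PY; exists b1, b2, b3.
have EP2 : <<[:: mf b1; mf b2; mf b3]>>%VS = P2.
  apply/eqP; rewrite eqEdim (eqP fb) dP2 leqnn andbT.
  by apply/span_subvP => v; rewrite !inE => /or3P [/eqP->|/eqP->|/eqP->].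
have EP1 : <<[:: mf a1; mf a2; mf a3]>>%VS = P1.
  apply/eqP; rewrite eqEdim (eqP fa) dP1 leqnn andbT.
  by apply/span_subvP => v; rewrite !inE => /or3P [/eqP->|/eqP->|/eqP->].
have [x xX xn0] : exists2 x, x \in X & x != 0 by apply: exists_nz; rewrite dX.
have xP1 : x \in P1 by apply: (subvP Z1P1); apply: (subvP XZ1).
have xP2 : x \in P2 by apply: (subvP Z2P2); apply: (subvP XZ2).
move: (xP1); rewrite -EP1 => /mem_span3 [al1 [al2 [al3 Ex]]].
pose C0 : 'M[F0]_3 := \matrix_(i, j) pol ([:: a1; a2; a3]`_i) ([:: b1; b2; b3]`_j).
pose w : 'rV[F]_3 := \row_i [:: al1; al2; al3]`_i.
have wn0 : w != 0.
  apply/negP => /eqP w0; move: xn0; rewrite Ex.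
  have e1 := congr1 (fun M : 'rV[F]_3 => M 0 (inord 0)) w0.
  have e2 := congr1 (fun M : 'rV[F]_3 => M 0 (inord 1)) w0.
  have e3 := congr1 (fun M : 'rV[F]_3 => M 0 (inord 2)) w0.
  move: e1 e2 e3; rewrite /= !mxE !inordK //= => -> -> ->.
  by rewrite !scale0r !addr0 eqxx.
have Hw : w *m map_mx f C0 = 0.
  apply/rowP => j; rewrite !mxE sum3 !mxE !inordK //= -!pol_map.
  have Bj : mf ([:: b1; b2; b3]`_j) \in P2.
    have := mem_nth 0 (ltn_ord j : (j < size [:: b1; b2; b3])%N).
    by rewrite !inE => /or3P [/eqP->|/eqP->|/eqP->].
  have := ts_pol tP2 xP2 Bj; rewrite Ex !polDl !polZl.
  by move=> <-.
have [w0 w0n0 Hw0] := ratker (ex_intro2 _ _ w wn0 Hw).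
pose x0 := w0 0 (inord 0) *: a1 + w0 0 (inord 1) *: a2 + w0 0 (inord 2) *: a3.
have x'n0 : mf x0 != 0 by apply: comb3_nz.
have x0n0 : x0 != 0 by apply: contraNneq x'n0 => ->; rewrite map_mx0.
have x'P1 : mf x0 \in P1.
  by rewrite -EP1 map_comb3; apply: memvD; [apply: memvD|]; apply: memvZ;
     apply: memv_span; rewrite !inE eqxx ?orbT.
have pxb : forall j : 'I_3, pol x0 ([:: b1; b2; b3]`_j) = 0.
  move=> j; have := congr1 (fun M : 'rV[F0]_3 => M 0 j) Hw0.
  rewrite /= !mxE sum3 !mxE !inordK //= /x0 !polDl !polZl.
  by move=> ->.
have x'P2 : mf x0 \in P2.
  apply: (ts3_max (conj dP2 tP2) (tP1 _ x'P1)) => p.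
  rewrite -EP2 => /mem_span3 [c1 [c2 [c3 ->]]].
  rewrite !polDl !polZl !(polC _ (mf x0)) !pol_map.
  move: (pxb (@Ordinal 3 0 isT)) (pxb (@Ordinal 3 1 isT)) (pxb (@Ordinal 3 2 isT)).
  by rewrite /= => -> -> ->; rewrite rmorph0 !mulr0 !addr0.
pose W := (P1 :&: P2)%VS.
have XW : (X <= W)%VS.
  by rewrite subv_cap (subv_trans XZ1 Z1P1) (subv_trans XZ2 Z2P2).
have dW : (\dim W <= 1)%N.
  rewrite leqNgt; apply/negP => dW.
  have tW : tot_sing W by move=> v /memv_capP [vP1 _]; exact: tP1.
  have tWY : tot_sing (W + Y).
    apply: (ts_add tW tY) => v y /memv_capP [vP1 vP2] yY.
    have := subvP YZ _ yY => /memv_addP [z1 z1Z [z2 z2Z ->]].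
    rewrite polDr (ts_pol tP1 vP1 (subvP Z1P1 _ z1Z)).
    by rewrite (ts_pol tP2 vP2 (subvP Z2P2 _ z2Z)) addr0.
  have WYX : ((W :&: Y) <= X)%VS.
    apply/subvP => v /memv_capP [/memv_capP [vP1 vP2] vY].
    apply: M1.
    - exact: M3 P1 Z1 (conj dP1 tP1) (conj d1 t1) Z1P1 Z1Y (elimN eqP P1Y) _ vP1 vY.
    - exact: M3 P2 Z2 (conj dP2 tP2) (conj d2 t2) Z2P2 Z2Y (elimN eqP P2Y) _ vP2 vY.
  move: (dimvS WYX) (dimv_sum_cap W Y) (noTS4 tWY) dW; rewrite dX dY.
  move: (\dim (W :&: Y)) (\dim (W + Y)) (\dim W) => n1 n2 n3.
  clear; lia.
have EW : W = X.
  apply/eqP; rewrite eq_sym eqEdim XW dX dW //.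
left; exists x0 => //.
by rewrite -EW memv_cap x'P1 x'P2.
Qed.

Definition Tset (Z : {vspace 'rV[F]_6}) : Prop :=
  grass_point Z /\ (RatPt Z \/ RatPl Z).

Lemma Tsub : grass_subspace Tset.
Proof.
split; first by move=> Z [].
move=> l [X [Y [tsX tsY XY Hl]]] [Z1 [Z2 [Z12 l1 T1 l2 T2]]] Z lZ.
have [g1 [XZ1 Z1Y]] := (Hl Z1).1 l1.
have [g2 [XZ2 Z2Y]] := (Hl Z2).1 l2.
have [g [XZ ZY]] := (Hl Z).1 lZ.
have [[u un0 uX]|RY] := line_key tsX tsY g1 g2 XZ1 Z1Y XZ2 Z2Y Z12 T1.2 T2.2.
- by split => //; left; exists u => //; exact: (subvP XZ).
- by split => //; right; exists Y; split.
Qed.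

Lemma free2_map (b1 b2 : 'rV[F0]_6) : free [:: b1; b2] -> free [:: mf b1; mf b2].
Proof.
rewrite !free_cons span_nil memv0 nil_free !andbT span_seq1 => /andP [n1 n2].
have mn0 : mf b2 != 0.
  apply/negP => /eqP H; move/negP: n2; apply; apply/eqP/rowP => k.
  have := congr1 (fun M : 'rV[F]_6 => M 0 k) H; rewrite /= !mxE => /eqP.
  by rewrite fmorph_eq0 => /eqP.
rewrite span_nil memv0 nil_free andbT mn0 andbT span_seq1.
apply/negP => /vlineP [c E].
have [j bj] : exists j, b2 0 j != 0 by apply/rV0Pn.
have Ej := congr1 (fun M : 'rV[F]_6 => M 0 j) E; rewrite /= !mxE in Ej.
have Ec : c = f (b1 0 j / b2 0 j).
  by rewrite fmorph_div Ej mulfK // fmorph_eq0.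
move/negP: n1; apply; apply/vlineP; exists (b1 0 j / b2 0 j).
by apply: (@map_mx_inj _ _ f); rewrite map_mxZ -Ec.
Qed.

Lemma ext_in_T (W : {vspace 'rV[F]_6}) : ext_lines f W -> Tset W.
Proof.
move=> [L [[dL tL] ->]]; rewrite /ext_span.
have fb := basis_free (vbasisP L).
have mb : forall v, v \in (tval (vbasis L)) -> v \in L by move=> v Hv; apply: vbasis_mem.
have : size (vbasis L) = 2%N by rewrite size_tuple.
move: fb mb; move: (tval (vbasis L)) => bs.
case: bs => [|b1 [|b2 [|]]] //= fb mb _.
have b1L : b1 \in L by apply: mb; rewrite ?inE eqxx.
have b2L : b2 \in L by apply: mb; rewrite ?inE eqxx orbT.
have ffb := free2_map fb.
split; [split|].
- by rewrite (eqP ffb).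
- move=> v /mem_span2 [c1 [c2 ->]].
  rewrite qfD !qfZ polZl polZr !qf_map pol_map (tL _ b1L) (tL _ b2L).
  by rewrite (ts_pol tL b1L b2L) !rmorph0 !mulr0 !addr0.
- left; exists b1; first by apply: (free_not0 fb); rewrite mem_head.
  by apply: memv_span; rewrite mem_head.
Qed.

Definition z1 (t : F) : 'rV[F]_6 := \row_(j < 6) [:: 0; 0; 1; 0; 0; t]`_j.
Definition z2 (t : F) : 'rV[F]_6 := \row_(j < 6) [:: 0; 0; 0; -t; 1; 0]`_j.

Lemma Z0_point (t : F) : grass_point <<[:: z1 t; z2 t]>>.
Proof.
have z2n0 : z2 t != 0.
  apply/negP => /eqP H; have := congr1 (fun M : 'rV[F]_6 => M 0 (inord 4)) H.
  by rewrite /= !mxE inordK //= => /eqP; rewrite oner_eq0.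
have fz : free [:: z1 t; z2 t].
  rewrite free_cons span_seq1 free_cons span_nil memv0 nil_free z2n0 !andbT.
  apply/negP => /vlineP [c H]; have := congr1 (fun M : 'rV[F]_6 => M 0 (inord 2)) H.
  by rewrite /= !mxE inordK //= mulr0 => /eqP; rewrite oner_eq0.
split; first by rewrite (eqP fz).
move=> v /mem_span2 [c1 [c2 ->]].
rewrite /qf !mxE !inordK //=; ring.
Qed.

Lemma Z0_noRatPt (t : F) : (forall x, f x <> t) -> ~ RatPt <<[:: z1 t; z2 t]>>.
Proof.
move=> Ht [u un0 /mem_span2 [c1 [c2 E]]].
have e k := congr1 (fun M : 'rV[F]_6 => M 0 (inord k)) E.
move: (e 0%N) (e 1%N) (e 2%N) (e 3%N) (e 4%N) (e 5%N).
rewrite /= !mxE !inordK //= !mulr0 !mulr1 !addr0 !add0r.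
move=> e0 e1 e2 e3 e4 e5.
have c10 : c1 = 0.
  apply/eqP/negPn/negP => c1n0; apply: (Ht (u 0 (inord 5) / u 0 (inord 2))).
  by rewrite fmorph_div e5 e2 mulrC mulKf.
have c20 : c2 = 0.
  apply/eqP/negPn/negP => c2n0; apply: (Ht (- u 0 (inord 3) / u 0 (inord 4))).
  by rewrite fmorph_div rmorphN e3 e4 mulrN opprK mulrC mulKf.
move/negP: un0; apply; apply/eqP; apply: row6_eq0 => k.
have z : forall a, f a = 0 -> a = 0 by move=> a /eqP; rewrite fmorph_eq0 => /eqP.
case: k => [|[|[|[|[|[|k]]]]]] // _; apply: z.
- by rewrite e0.
- by rewrite e1.
- by rewrite e2 c10.
- by rewrite e3 c20 mul0r.
- by rewrite e4 c20.
- by rewrite e5 c10 mul0r.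
Qed.

Lemma Z0_noRatPl (t : F) : (forall x, f x <> t) -> ~ RatPl <<[:: z1 t; z2 t]>>.
Proof.
move=> Ht [Y [[dY tY] ZY [a1 [a2 [a3 [fa A1 A2 A3]]]]]].
pose c1 : 'rV[F0]_3 := \row_i ([:: a1; a2; a3]`_i) 0 (inord 0).
pose c2 : 'rV[F0]_3 := \row_i ([:: a1; a2; a3]`_i) 0 (inord 1).
have [x xn0 [h1 h2]] := solve2 c1 c2.
pose w0 := x 0 (inord 0) *: a1 + x 0 (inord 1) *: a2 + x 0 (inord 2) *: a3.
have w00 : w0 0 (inord 0) = 0.
  by rewrite -h1 dot_expand !mxE !inordK.
have w01 : w0 0 (inord 1) = 0.
  by rewrite -h2 dot_expand !mxE !inordK.
have w00' := w00; rewrite !mxE in w00'.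
have w01' := w01; rewrite !mxE in w01'.
have wn0 : mf w0 != 0 by apply: comb3_nz.
have w0n0 : w0 != 0 by apply: contraNneq wn0 => ->; rewrite map_mx0.
have wY : mf w0 \in Y.
  by rewrite map_comb3; apply: memvD; [apply: memvD|]; apply: memvZ.
set Z0 := <<[:: z1 t; z2 t]>>%VS in ZY *.
case: (boolP (mf w0 \in Z0)) => [wZ|wZ].
  by apply: (Z0_noRatPt Ht); exists w0.
have [dZ0 _] := Z0_point t.
have EY : (Z0 + <[mf w0]>)%VS = Y.
  apply/eqP; rewrite eqEdim dim_addl // dZ0 dY leqnn andbT subv_add ZY /=.
  by rewrite -memvE.
pose e0 : 'rV[F]_6 := \row_(j < 6) [:: 1; 0; 0; 0; 0; 0]`_j.
have eY : e0 \in Y.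
  apply: (ts3_max (conj dY tY)).
    by rewrite /qf !mxE !inordK //=; ring.
  move=> p; rewrite -EY => /memv_addP [z /mem_span2 [d1 [d2 ->]] [w /vlineP [k ->] ->]].
  rewrite pol_expand !mxE !inordK //= w01' rmorph0; ring.
move: eY; rewrite -EY => /memv_addP [z /mem_span2 [d1 [d2 ->]] [w /vlineP [k ->] E]].
have := congr1 (fun M : 'rV[F]_6 => M 0 (inord 0)) E.
rewrite /= !mxE !inordK //= w00' rmorph0 !mulr0 !addr0 => /eqP.
by rewrite oner_eq0.
Qed.
End Rat.

Theorem mainTheorem5 (F F0 : fieldType) (f : {rmorphism F0 -> F}) :
  ~ (forall y : F, exists x : F0, f x = y) -> ~ F0_generated f.
Proof.
move=> nsurj gen.
have [t Ht] : exists t : F, forall x, f x <> t.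
  apply: NNPP => H; apply: nsurj => y; apply: NNPP => Hy; apply: H.
  by exists y => x Hx; apply: Hy; exists x.
have := gen _ (Z0_point t) (Tset f) (Tsub f) (@ext_in_T _ _ f).
by case => _ [H|H]; [exact: (Z0_noRatPt Ht H) | exact: (Z0_noRatPl Ht H)].
Qed.
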